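(* Let $F$ be a field of characteristic $\neq 2$ and let $a,b\in F^*$ be such that the quadratic form $\langle 1,a,b,-ab\rangle$ is not weakly isotropic over $F$. Let $t\in F^*$ be a nonzero sum of squares in $F$. Then $\langle 1,a,b,-ab\rangle$ is not weakly isotropic over $F(\sqrt{t})$.
   Context: All fields have characteristic different from $2$; quadratic forms are finite-dimensional and nondegenerate. For a form $q$ and an integer $m\geq 1$, $m\times q$ denotes the orthogonal sum of $m$ copies of $q$. A form $q$ over $F$ is called weakly isotropic if $m\times q$ is isotropic for some integer $m\geq 1$. *)

(* Defs.v *)
From HB Require Import structures.
From mathcomp Require Import all_boot all_order all_algebra.
Set Implicit Arguments. Unset Strict Implicit. Unset Printing Implicit Defensive.
Import Order.TTheory GRing.Theory Num.Theory.
Local Open Scope ring_scope.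

(* A diagonal quadratic form <c_0, ..., c_{n-1}> over a field K is
   represented by its sequence of (nonzero) diagonal coefficients. *)

Definition diag_isotropic (K : fieldType) (q : seq K) : Prop :=
  exists v : seq K,
    [/\ size v = size q, has (fun x => x != 0) v &
        \sum_(i < size q) q`_i * v`_i ^+ 2 = 0].

(* m x q : orthogonal sum of m copies of q (concatenation of diagonals). *)
Definition mult_form (K : fieldType) (m : nat) (q : seq K) : seq K :=
  flatten (nseq m q).

Definition weakly_isotropic (K : fieldType) (q : seq K) : Prop :=
  exists m : nat, (0 < m)%N /\ diag_isotropic (mult_form m q).

Definition sum_of_squares (K : fieldType) (t : K) : Prop :=
  exists s : seq K, t = \sum_(x <- s) x ^+ 2.

Definition form_1abab (K : fieldType) (a b : K) : seq K :=
  [:: 1; a; b; - (a * b)].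

(* Main.v *)
Require Import Defs.
From Stdlib Require Import Classical.
From HB Require Import structures.
From mathcomp Require Import all_boot all_order all_algebra.
Import Order.TTheory GRing.Theory Num.Theory.
Set Implicit Arguments. Unset Strict Implicit.
Local Open Scope ring_scope.

Fixpoint qv (K : fieldType) (c v : seq K) : K :=
  match c, v with x :: c', y :: v' => x * y ^+ 2 + qv c' v' | _, _ => 0 end.

Lemma qv_sum (K : fieldType) (c v : seq K) : size v = size c ->
  \sum_(i < size c) c`_i * v`_i ^+ 2 = qv c v.
Proof.
elim: c v => [|x c IH] [|y v] //=; first by rewrite big_ord0.
move=> [] Hs; rewrite big_ord_recl /=; congr (_ + _); exact: IH.
Qed.

Lemma isoE (K : fieldType) (c : seq K) : diag_isotropic c <->
  exists v, [/\ size v = size c, has (fun x => x != 0) v & qv c v = 0].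
Proof.
split=> [[v [H1 H2 H3]]|[v [H1 H2 H3]]]; exists v; split=> //;
  by rewrite ?(qv_sum H1) // -(qv_sum H1).
Qed.

Lemma qv_cat (K : fieldType) (c1 c2 v1 v2 : seq K) : size v1 = size c1 ->
  qv (c1 ++ c2) (v1 ++ v2) = qv c1 v1 + qv c2 v2.
Proof.
elim: c1 v1 => [|x c IH] [|y v] //=; first by rewrite add0r.
by move=> [] Hs; rewrite IH // addrA.
Qed.

Lemma qv_map (K L : fieldType) (f : {rmorphism K -> L}) (c v : seq K) :
  qv (map f c) (map f v) = f (qv c v).
Proof.
elim: c v => [|x c IH] [|y v] /=; rewrite ?rmorph0 //.
by rewrite IH rmorphD rmorphM rmorphXn.
Qed.

Lemma qv_scale (K : fieldType) (u : K) (c v : seq K) :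
  qv c (map (fun y => u * y) v) = u ^+ 2 * qv c v.
Proof.
elim: c v => [|x c IH] [|y v] /=; rewrite ?mulr0 //.
by rewrite IH mulrDr exprMn mulrCA.
Qed.

Lemma mult_formS (K : fieldType) (n : nat) (c : seq K) :
  mult_form n.+1 c = c ++ mult_form n c.
Proof. by []. Qed.

Lemma mult_form_mul (K : fieldType) (n m : nat) (q : seq K) :
  mult_form n (mult_form m q) = mult_form (n * m) q.
Proof.
elim: n => [|n IH] //; rewrite mult_formS IH mulSn /mult_form nseqD flatten_cat //.
Qed.

Lemma mult_form_map (K L : fieldType) (f : K -> L) n (q : seq K) :
  mult_form n (map f q) = map f (mult_form n q).
Proof. by elim: n => [|n IH] //; rewrite !mult_formS IH map_cat. Qed.

Lemma size_mult_form (K : fieldType) n (q : seq K) :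
  size (mult_form n q) = (n * size q)%N.
Proof. by elim: n => [|n IH] //; rewrite mult_formS size_cat IH mulSn. Qed.

Lemma chunks (K : fieldType) (c y : seq K) (us : seq K) : size y = size c ->
  [/\ size (flatten [seq map (fun z => u * z) y | u <- us]) = size (mult_form (size us) c) &
   qv (mult_form (size us) c) (flatten [seq map (fun z => u * z) y | u <- us])
    = (\sum_(u <- us) u ^+ 2) * qv c y].
Proof.
move=> Hs; elim: us => [|u us [IH1 IH2]] /=; first by rewrite big_nil mul0r.
rewrite mult_formS size_cat size_map Hs IH1; split; first by rewrite size_cat.
by rewrite qv_cat ?size_map // IH2 qv_scale big_cons mulrDl.
Qed.

Lemma chunks_nz (K : fieldType) (y us : seq K) :
  \sum_(u <- us) u ^+ 2 != 0 -> has (fun x => x != 0) y ->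
  has (fun x => x != 0) (flatten [seq map (fun z => u * z) y | u <- us]).
Proof.
move=> H Hy; elim: us H => [|u us IH] /=; first by rewrite big_nil eqxx.
rewrite big_cons has_cat; have [->|uN0] := eqVneq u 0.
  by rewrite expr0n /= add0r => /IH ->; rewrite orbT.
move=> _; apply/orP; left; rewrite has_map.
case/hasP: Hy => z zin zN0; apply/hasP; exists z => //=; exact: mulf_neq0.
Qed.
Lemma step (L : comNzRingType) (C X Y s T P Q R : L) : s ^+ 2 = T ->
  C * (X + Y * s) ^+ 2 + (P + T * Q + 2 * R * s) =
  (C * X ^+ 2 + P) + T * (C * Y ^+ 2 + Q) + 2 * (C * X * Y + R) * s.
Proof.
move=> hs.
rewrite sqrrD exprMn hs !mulrDr !mulrDl !mul1r [T * (C * _)]mulrC !mulrA.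
set a := C * X ^+ 2; set b := C * X * Y * s; set c := C * Y ^+ 2 * T.
set r := R * s; set q := T * Q.
rewrite !addrA; congr (_ + _ + _).
rewrite -!addrA; congr (_ + _).
do 3! rewrite [RHS]addrC -!addrA.
congr (_ + (_ + _)); exact: addrCA.
Qed.

Fixpoint pv (K : fieldType) (c x y : seq K) : K :=
  match c, x, y with c0 :: c', x0 :: x', y0 :: y' => c0 * x0 * y0 + pv c' x' y'
  | _, _, _ => 0 end.

Lemma qv_expand (F L : fieldType) (iota : {rmorphism F -> L}) (s : L) (t : F)
  (hs : s ^+ 2 = iota t) (c x y : seq F) :
  size x = size c -> size y = size c ->
  qv (map iota c) [seq iota p.1 + iota p.2 * s | p <- zip x y] =
  iota (qv c x) + iota t * iota (qv c y) + 2 * iota (pv c x y) * s.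
Proof.
elim: c x y => [|c0 c IH] [|x0 x] [|y0 y] //=.
  by rewrite !rmorph0 !mulr0 !mul0r !addr0.
move=> [] Hx [] Hy; rewrite IH // !rmorphD !rmorphM -!expr2; exact: step.
Qed.

Lemma decomp (F L : fieldType) (iota : {rmorphism F -> L}) (s : L)
  (hgen : forall z : L, exists x y : F, z = iota x + iota y * s) (v : seq L) :
  exists x y : seq F, [/\ size x = size v, size y = size v &
    v = [seq iota p.1 + iota p.2 * s | p <- zip x y]].
Proof.
elim: v => [|z v [x [y [H1 H2 H3]]]]; first by exists [::], [::].
have [x0 [y0 ->]] := hgen z.
by exists (x0 :: x), (y0 :: y); rewrite /= H1 H2 H3.
Qed.

Lemma nz_split (F L : fieldType) (g : F * F -> L) (x y : seq F) :
  g (0, 0) = 0 ->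
  has (fun z => z != 0) [seq g p | p <- zip x y] ->
  has (fun z => z != 0) x || has (fun z => z != 0) y.
Proof.
move=> g0; elim: x y => [|x0 x IH] [|y0 y] //=.
case: (eqVneq x0 0) => [->|] //=; case: (eqVneq y0 0) => [->|] //=; rewrite ?orbT //.
by rewrite g0 eqxx /=; apply: IH.
Qed.

Theorem lemma2p2 (F : fieldType) (a b t : F)
  (hchar : (2 : F) != 0) (ha : a != 0) (hb : b != 0)
  (hnwi : ~ weakly_isotropic (form_1abab a b))
  (ht0 : t != 0) (hts : sum_of_squares t)
  (L : fieldType) (iota : {rmorphism F -> L}) (s : L)
  (hs : s ^+ 2 = iota t)
  (hgen : forall z : L, exists x y : F, z = iota x + iota y * s) :
  ~ weakly_isotropic (map iota (form_1abab a b)).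
Proof.
move=> [m [m0 /isoE [v [Hsz Hnz Hq0]]]].
move: Hsz Hq0; rewrite mult_form_map; set c := mult_form m _ => Hsz Hq0.
have [x [y [Hx Hy Hv]]] := decomp hgen v.
have Hxc : size x = size c by rewrite Hx Hsz size_map.
have Hyc : size y = size c by rewrite Hy Hsz size_map.
have Hq := Hq0; rewrite Hv (qv_expand hs) // in Hq.
have Hq' : iota (qv c x + t * qv c y) + iota (2 * pv c x y) * s = 0.
  by rewrite rmorphD !rmorphM rmorph_nat.
case: (classic (exists r, s = iota r)) => [[r Hr]|Hns].
  set w := [seq p.1 + p.2 * r | p <- zip x y].
  have Hvw : v = map iota w.
    by rewrite Hv /w -map_comp; apply: eq_map => p /=; rewrite Hr rmorphD rmorphM.
  apply: hnwi; exists m; split => //; apply/isoE; exists w; split.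
  - by rewrite size_map size_zip Hxc Hyc minnn.
  - move: Hnz; rewrite Hvw has_map; apply: sub_has => z /=.
    by apply: contra => /eqP ->; rewrite rmorph0.
  - by apply: (fmorph_inj iota); rewrite rmorph0 -qv_map -Hvw.
set A := qv c x + t * qv c y; set B := 2 * pv c x y.
have B0 : B = 0.
  apply/eqP; apply/negPn/negP => Bn; apply: Hns; exists (- A / B).
  have iBn : iota B != 0 by rewrite fmorph_eq0.
  apply: (mulfI iBn); rewrite -rmorphM [B * _]mulrC divfK // rmorphN.
  by apply/eqP; rewrite -addr_eq0 addrC; apply/eqP.
move: Hq'; rewrite -/A -/B B0 rmorph0 mul0r addr0 => Hq'.
have A0 : A = 0 by apply: (fmorph_inj iota); rewrite rmorph0.
have [us Hus] := hts.
apply: hnwi; exists ((size us).+1 * m)%N; split; first by rewrite muln_gt0 m0.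
apply/isoE; rewrite -mult_form_mul.
have [Hs1 Hs2] := chunks us Hyc.
exists (x ++ flatten [seq map (fun z => u * z) y | u <- us]); split.
- by rewrite mult_formS !size_cat Hs1 Hxc.
- rewrite has_cat.
  have := @nz_split F L (fun p => iota p.1 + iota p.2 * s) x y.
  rewrite !rmorph0 mul0r addr0 -Hv => /(_ erefl Hnz) /orP [->//|hy].
  by apply/orP; right; apply: chunks_nz => //; rewrite -Hus.
- by rewrite mult_formS qv_cat // Hs2 -Hus.
Qed.
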